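(* Let $\delta'\in(0,1)$, $\rho=(\rho_c,\rho_u,\rho_w)\in(0,\infty)^3$ and $X^{(1)},\dots,X^{(n)}\in\mathcal X$. On the event $\mathcal E_{U,m}(\delta')$, for every $\varphi\in\Omega_\rho$, \[ \sup_{j\in[n]}\big|f(X^{(j)};\varphi)-f_{\mathrm{lin}}(X^{(j)};\varphi)\big|\le\frac1{\sqrt m}\Big(L_{1,m}(\delta')\rho_c\sqrt{\rho_w^2+\rho_u^2}+L_{2,m}(\delta')(\rho_w^2+\rho_u^2)\Big)=:B_{\mathrm{lin},m}(\delta'). \]
   Context: $\mathcal{X}=\{X\in\mathbb{R}^{d\times T}:\max_t\|X_t\|_2\le1\}$ (columns $X_t$); each $X$ has a fixed query $q_X\in\mathbb{R}^d$, $\|q_X\|_2\le1$. Softmax $(\sigma_s(z))_t=e^{z_t}/\sum_se^{z_s}$; $a(X;W)=X\sigma_s(X^\top Wq_X)$; $h(X;\theta)=\sigma(U^\top a(X;W))$, $\theta=(U,\operatorname{vec}(W))$; $f(X;\varphi)=m^{-1/2}\sum_{i=1}^mc_ih(X;\theta_i)$, $\varphi_i=(c_i,U_i,\operatorname{vec}(W_i))$. $\sigma$ twice differentiable with $|\sigma|\le\sigma_0,|\sigma'|\le\sigma_1,|\sigma''|\le\sigma_2$. $m$ even. Symmetric initialization $\varphi^{(0)}$: for $i\le m/2$, independently, $W_i^{(0)}$ with i.i.d. $\mathcal N(0,1)$ entries, $U_i^{(0)}\sim\mathcal N(0,I_d)$, $c_i^{(0)}$ uniform on $\{\pm1\}$;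 $W_{i+m/2}^{(0)}=W_i^{(0)}$, $U_{i+m/2}^{(0)}=U_i^{(0)}$, $c_{i+m/2}^{(0)}=-c_i^{(0)}$. $\Omega_\rho=\{\varphi:|c_i-c_i^{(0)}|\le\rho_c/\sqrt m,\|U_i-U_i^{(0)}\|_2\le\rho_u/\sqrt m,\|W_i-W_i^{(0)}\|_F\le\rho_w/\sqrt m\ \forall i\}$. $f_{\mathrm{lin}}(X;\varphi)=f(X;\varphi^{(0)})+\langle\nabla_\varphi f(X;\varphi^{(0)}),\varphi-\varphi^{(0)}\rangle$. $B_{U,m}(\delta')=\sqrt d+\sqrt{2\log(m/(2\delta'))}+\rho_u/\sqrt m$; $L_{1,m}(\delta')=\sigma_1\sqrt{1+B_{U,m}^2}$; $L_{2,m}(\delta')=\sigma_2(1+B_{U,m}^2)+8\sigma_1\sqrt{1+B_{U,m}^2}$. $\mathcal E_{U,m}(\delta')=\{\max_{i\in[m]}\|U_i^{(0)}\|_2\le\sqrt d+\sqrt{2\log(m/(2\delta'))}\}$. *)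

(* Defs.v *)
From HB Require Import structures.
From mathcomp Require Import all_boot all_order all_algebra.
From mathcomp Require Import all_classical all_reals all_analysis.
Set Implicit Arguments. Unset Strict Implicit. Unset Printing Implicit Defensive.
Import Order.TTheory GRing.Theory Num.Theory.
Import numFieldNormedType.Exports.
Local Open Scope ring_scope.

Section Defs.
Variable R : realType.

Definition vnorm (d : nat) (v : 'cV[R]_d) : R := Num.sqrt (\sum_i (v i 0) ^+ 2).

Definition fnorm (p q : nat) (A : 'M[R]_(p, q)) : R :=
  Num.sqrt (\sum_i \sum_j (A i j) ^+ 2).

Definition inX (d T : nat) (X : 'M[R]_(d, T)) : Prop :=
  forall t : 'I_T, vnorm (col t X) <= 1.

Definition softmax (T : nat) (z : 'cV[R]_T) : 'cV[R]_T :=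
  \col_t (expR (z t 0) / \sum_s expR (z s 0)).

Definition attn (d T : nat) (X : 'M[R]_(d, T)) (q : 'cV[R]_d) (W : 'M[R]_d)
  : 'cV[R]_d := X *m softmax (X^T *m W *m q).

Definition hneur (sigma : R -> R) (d T : nat) (X : 'M[R]_(d, T)) (q : 'cV[R]_d)
  (U : 'cV[R]_d) (W : 'M[R]_d) : R := sigma ((U^T *m attn X q W) 0 0).

Definition fnet (sigma : R -> R) (d T m : nat) (X : 'M[R]_(d, T)) (q : 'cV[R]_d)
  (c : 'I_m -> R) (U : 'I_m -> 'cV[R]_d) (W : 'I_m -> 'M[R]_d) : R :=
  (Num.sqrt m%:R)^-1 * \sum_i c i * hneur sigma X q (U i) (W i).

(* f_lin(X;phi) = f(X;phi0) + <grad_phi f(X;phi0), phi - phi0>, the inner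
   product being written as the directional derivative at phi0 in direction
   phi - phi0. *)
Definition flin (sigma : R -> R) (d T m : nat) (X : 'M[R]_(d, T)) (q : 'cV[R]_d)
  (c0 : 'I_m -> R) (U0 : 'I_m -> 'cV[R]_d) (W0 : 'I_m -> 'M[R]_d)
  (c : 'I_m -> R) (U : 'I_m -> 'cV[R]_d) (W : 'I_m -> 'M[R]_d) : R :=
  fnet sigma X q c0 U0 W0 +
  derive1 (fun t : R => fnet sigma X q
             (fun i => c0 i + t * (c i - c0 i))
             (fun i => U0 i + t *: (U i - U0 i))
             (fun i => W0 i + t *: (W i - W0 i))) 0.

Definition inOmega (d m : nat) (rc ru rw : R)
  (c0 : 'I_m -> R) (U0 : 'I_m -> 'cV[R]_d) (W0 : 'I_m -> 'M[R]_d)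
  (c : 'I_m -> R) (U : 'I_m -> 'cV[R]_d) (W : 'I_m -> 'M[R]_d) : Prop :=
  forall i : 'I_m,
    [/\ `|c i - c0 i| <= rc / Num.sqrt m%:R,
        vnorm (U i - U0 i) <= ru / Num.sqrt m%:R &
        fnorm (W i - W0 i) <= rw / Num.sqrt m%:R].

(* Support of the symmetric initialization: c_i^(0) in {+-1}, and for
   i < m/2 the neuron i + m/2 copies (W,U) of neuron i with c negated. *)
Definition sym_init (d m : nat)
  (c0 : 'I_m -> R) (U0 : 'I_m -> 'cV[R]_d) (W0 : 'I_m -> 'M[R]_d) : Prop :=
  (forall i : 'I_m, c0 i = 1 \/ c0 i = -1) /\
  (forall i j : 'I_m, (i < m./2)%N -> nat_of_ord j = (i + m./2)%N ->
     [/\ W0 j = W0 i, U0 j = U0 i & c0 j = - c0 i]).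

Definition BUm (d m : nat) (delta ru : R) : R :=
  Num.sqrt d%:R + Num.sqrt (2 * ln (m%:R / (2 * delta))) + ru / Num.sqrt m%:R.

Definition L1m (s1 : R) (d m : nat) (delta ru : R) : R :=
  s1 * Num.sqrt (1 + BUm d m delta ru ^+ 2).

Definition L2m (s1 s2 : R) (d m : nat) (delta ru : R) : R :=
  s2 * (1 + BUm d m delta ru ^+ 2) + 8 * s1 * Num.sqrt (1 + BUm d m delta ru ^+ 2).

Definition eventU (d m : nat) (delta : R) (U0 : 'I_m -> 'cV[R]_d) : Prop :=
  forall i : 'I_m,
    vnorm (U0 i) <= Num.sqrt d%:R + Num.sqrt (2 * ln (m%:R / (2 * delta))).

End Defs.

(* Main.v *)
Require Import Defs.
From HB Require Import structures.
From mathcomp Require Import all_boot all_order all_algebra.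
From mathcomp Require Import all_classical all_reals all_analysis.
From mathcomp Require Import ring lra.
Import Order.TTheory GRing.Theory Num.Theory.
Import numFieldNormedType.Exports.
Local Open Scope classical_set_scope.
Local Open Scope ring_scope.

Section Taylor.
Variable R : realType.

Lemma mvt_bound (f df : R -> R) (a b K : R) : a <= b ->
  (forall x, is_derive x (1:R) f (df x)) -> (forall x, a <= x <= b -> `|df x| <= K) ->
  `|f b - f a| <= K * (b - a).
Proof.
move=> leab H HK.
have cont : {within `[a, b], continuous f}.
  apply/continuous_subspaceT => r.
  apply/differentiable_continuous/derivable1_diffP; by case: (H r).
have [c cab ->] := MVT_segment leab (fun x _ => H x) cont.
rewrite normrM (ger0_norm (x := b - a)) ?subr_ge0 //.
apply: ler_wpM2r; first by rewrite subr_ge0.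
apply: HK; by move: cab; rewrite in_itv /= => /andP[-> ->].
Qed.

Lemma taylor2_bound (f df ddf : R -> R) (K : R) :
  (forall x, is_derive x (1:R) f (df x)) -> (forall x, is_derive x (1:R) df (ddf x)) ->
  (forall x, 0 <= x <= 1 -> `|ddf x| <= K) ->
  `|f 1 - f 0 - df 0| <= K.
Proof.
move=> Hf Hdf HK.
have K0 : 0 <= K by apply: le_trans (HK 0 _); rewrite ?normr_ge0 ?lexx ?ler01.
have Hg x : is_derive x (1:R) (fun y => f y - y * df 0) (df x - df 0).
  have h1 : is_derive x (1:R) (fun y : R => y * df 0) (df 0).
    have := is_deriveM (is_derive_id x (1:R)) (is_derive_cst (df 0) x 1).
    by rewrite scaler0 add0r [_%:A]mulr1.
  exact: (is_deriveB (Hf x) h1).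
have := @mvt_bound _ _ 0 1 K ler01 Hg.
rewrite subr0 mulr1 mul0r subr0 mul1r. rewrite [f 1 - _ - _]addrAC. apply.
move=> x /andP[x0 x1].
apply: le_trans (@mvt_bound _ _ 0 x K x0 Hdf _) _.
  move=> y /andP[y0 yx]; apply: HK; rewrite y0 /=; exact: le_trans yx x1.
by rewrite subr0 ler_piMr.
Qed.
End Taylor.

Lemma cs_sq (R : realType) (I : finType) (x y : I -> R) :
  (\sum_i x i * y i) ^+ 2 <= (\sum_i x i ^+ 2) * (\sum_i y i ^+ 2).
Proof.
set S := \sum_i x i * y i; set A := \sum_i x i ^+ 2; set B := \sum_i y i ^+ 2.
have B0 : 0 <= B by apply: sumr_ge0 => i _; exact: sqr_ge0.
have A0 : 0 <= A by apply: sumr_ge0 => i _; exact: sqr_ge0.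
case: (eqVneq B 0) => [HB|HB].
  have y0 i : y i = 0.
    have := psumr_eq0P (P := predT) (F := fun i => y i ^+ 2) (fun i _ => sqr_ge0 (y i)) HB (i := i) isT.
    by move/eqP; rewrite sqrf_eq0 => /eqP.
  have -> : S = 0 by rewrite /S; apply: big1 => i _; rewrite y0 mulr0.
  by rewrite HB expr0n /= mulr0.
have Bp : 0 < B by rewrite lt_def HB B0.
have H : 0 <= \sum_i (B * x i - S * y i) ^+ 2 by apply: sumr_ge0 => i _; exact: sqr_ge0.
have E : \sum_i (B * x i - S * y i) ^+ 2 = B * (B * A - S ^+ 2).
  have -> : \sum_i (B * x i - S * y i) ^+ 2 =
     \sum_i (B ^+ 2 * x i ^+ 2 - (2 * B * S) * (x i * y i) + S ^+ 2 * y i ^+ 2).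
    by apply: eq_bigr => i _; ring.
  rewrite big_split /= sumrB -!mulr_sumr -/A -/B -/S; ring.
rewrite E in H.
have : 0 <= B * A - S ^+ 2 by rewrite -(pmulr_rge0 _ Bp).
by rewrite subr_ge0 mulrC.
Qed.

Lemma cs (R : realType) (I : finType) (x y : I -> R) :
  `|\sum_i x i * y i| <= Num.sqrt (\sum_i x i ^+ 2) * Num.sqrt (\sum_i y i ^+ 2).
Proof.
rewrite -sqrtr_sqr -sqrtrM; last by apply: sumr_ge0 => i _; exact: sqr_ge0.
rewrite ler_sqrt; first exact: cs_sq.
by apply: mulr_ge0; apply: sumr_ge0 => i _; exact: sqr_ge0.
Qed.

Section S.
Variable R : realType.
Variables (T : nat) (a b : 'I_T -> R).

Lemma scR (k x : R) : k *: x = k * x. Proof. by []. Qed.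

Definition ex (s : 'I_T) (t : R) : R := expR (a s + t * b s).
Definition Nf (f : 'I_T -> R) (t : R) : R := \sum_s f s * ex s t.
Definition Ew (f : 'I_T -> R) (t : R) : R := Nf f t / Nf (fun _ => 1) t.

Lemma ex_derive s t : is_derive t (1:R) (ex s) (ex s t * b s).
Proof.
have h : is_derive t (1:R) (fun t => a s + t * b s) (b s).
  have := is_deriveD (is_derive_cst (a s) t 1)
    (is_deriveM (is_derive_id t (1:R)) (is_derive_cst (b s) t 1)).
  by rewrite scaler0 add0r [_%:A]mulr1 add0r.
exact: (is_derive1_comp (f := expR) (is_derive_expR _) h).
Qed.

Lemma Nf_derive f t : is_derive t (1:R) (Nf f) (Nf (fun s => f s * b s) t).
Proof.
have -> : Nf f = \sum_(s < T) (fun t => f s * ex s t).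
  by rewrite fct_sumE; apply/funext => x.
apply: is_derive_eq.
rewrite /Nf; apply: eq_bigr => s _ /=.
rewrite /ex !scR; ring.
Qed.

Lemma Nf_pos t : (0 < T)%N -> 0 < Nf (fun _ => 1) t.
Proof.
move=> T0; rewrite /Nf (bigD1 (Ordinal T0)) //= mul1r.
apply: ltr_pwDl; first exact: expR_gt0.
by apply: sumr_ge0 => i _; rewrite mul1r expR_ge0.
Qed.

Lemma Ew_derive f t : is_derive t (1:R) (Ew f)
  (Ew (fun s => f s * b s) t - Ew f t * Ew b t).
Proof.
case: (posnP T) => [T0|T0].
  have E g x : Nf g x = 0 by rewrite /Nf; apply: big1 => -[i Hi] _; exfalso; move: Hi; by rewrite T0.
  have -> : Ew f = cst 0 by apply/funext => x; rewrite /Ew E mul0r.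
  rewrite /Ew !E !mul0r subr0; exact: is_derive_cst.
have D0 := Nf_pos t T0.
have hV := is_deriveV (lt0r_neq0 D0) (Nf_derive (fun _ => 1) t).
have := is_deriveM (Nf_derive f t) hV.
rewrite /Ew => H; apply: is_derive_eq H _.
under [Nf (fun s => 1 * b s) t]eq_bigr do rewrite mul1r.

rewrite !scR -/(Nf b t). move: (Nf f t) (Nf b t) (Nf (fun s => f s * b s) t) (lt0r_neq0 D0) => x y z; move: (Nf _ t) => D HD. by field.
Qed.

Definition w (s : 'I_T) t := ex s t / Nf (fun _ => 1) t.

Lemma Ew_w f t : Ew f t = \sum_s w s t * f s.
Proof. rewrite /Ew /Nf mulr_suml; apply: eq_bigr => s _; rewrite /w; ring. Qed.

Lemma Nf1_ge0 t : 0 <= Nf (fun _ => 1) t.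
Proof. by apply: sumr_ge0 => i _; rewrite mul1r expR_ge0. Qed.

Lemma w_ge0 s t : 0 <= w s t.
Proof. by rewrite /w divr_ge0 ?expR_ge0 ?Nf1_ge0. Qed.

Lemma sum_w t : (0 < T)%N -> \sum_s w s t = 1.
Proof.
move=> T0; rewrite /w -mulr_suml.
have -> : \sum_s ex s t = Nf (fun _ => 1) t by apply: eq_bigr => s _; rewrite mul1r.
by rewrite divff // lt0r_neq0 // Nf_pos.
Qed.

Lemma sum_w_le1 t : \sum_s w s t <= 1.
Proof.
case: (posnP T) => [T0|T0]; last by rewrite sum_w.
rewrite big1 ?ler01 // => -[i Hi] _; exfalso; move: Hi; by rewrite T0.
Qed.

Lemma wsum_bound (g : 'I_T -> R) K t : 0 <= K -> (forall s, `|g s| <= K) ->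
  `|\sum_s w s t * g s| <= K.
Proof.
move=> K0 HK; apply: le_trans (ler_norm_sum _ _ _) _.
apply: (@le_trans _ _ (\sum_s w s t * K)).
  apply: ler_sum => s _; rewrite normrM ger0_norm ?w_ge0 //.
  by apply: ler_wpM2l; [exact: w_ge0| exact: HK].
by rewrite -mulr_suml -[leRHS]mul1r; apply: ler_wpM2r => //; exact: sum_w_le1.
Qed.

Lemma Ew_bound f K t : 0 <= K -> (forall s, `|f s| <= K) -> `|Ew f t| <= K.
Proof. by move=> K0 HK; rewrite Ew_w; apply: wsum_bound. Qed.

Lemma Ew_lin f g (k : R) t : Ew (fun s => f s + k * g s) t = Ew f t + k * Ew g t.
Proof.
rewrite !Ew_w mulr_sumr -big_split /=; apply: eq_bigr => s _; ring.
Qed.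

Lemma Ew_ext f g t : f =1 g -> Ew f t = Ew g t.
Proof. by move=> fg; rewrite !Ew_w; apply: eq_bigr => s _; rewrite fg. Qed.

Definition dE f t := Ew (fun s => f s * b s) t - Ew f t * Ew b t.

Lemma cov_bound (f : 'I_T -> R) (K M t : R) : 0 <= K -> 0 <= M -> (forall s, `|f s| <= K) ->
  (forall s, `|b s| <= M) -> `|dE f t| <= K * M.
Proof.
move=> K0 M0 HK HM.
case: (posnP T) => [T0|T0].
  have E g : Ew g t = 0.
    by rewrite Ew_w big1 // => -[i Hi] _; exfalso; move: Hi; rewrite T0.
  by rewrite /dE !E mul0r subrr normr0 mulr_ge0.
set mu := Ew b t.
have E1 : dE f t = \sum_s (Num.sqrt (w s t) * f s) * (Num.sqrt (w s t) * (b s - mu)).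
  rewrite /dE -/mu !Ew_w mulr_suml -sumrB; apply: eq_bigr => s _.
  have sw : Num.sqrt (w s t) * Num.sqrt (w s t) = w s t by rewrite -expr2 sqr_sqrtr // w_ge0.
  rewrite [RHS]mulrACA sw; ring.
rewrite E1. have := (@cs R _ (fun s => Num.sqrt (w s t) * f s) (fun s => Num.sqrt (w s t) * (b s - mu))). move=> H; apply: le_trans H _.
apply: ler_pM; try exact: sqrtr_ge0.
  rewrite -(ger0_norm K0) -sqrtr_sqr ler_sqrt ?sqr_ge0 //.
  have -> : \sum_s (Num.sqrt (w s t) * f s) ^+ 2 = \sum_s w s t * f s ^+ 2.
    by apply: eq_bigr => s _; rewrite exprMn sqr_sqrtr ?w_ge0.
  apply: le_trans (ler_norm _) _; apply: wsum_bound; first exact: sqr_ge0.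
  move=> s; rewrite normrX !expr2.
  by apply: ler_pM; rewrite ?normr_ge0.
rewrite -(ger0_norm M0) -sqrtr_sqr ler_sqrt ?sqr_ge0 //.
have -> : \sum_s (Num.sqrt (w s t) * (b s - mu)) ^+ 2 = \sum_s w s t * b s ^+ 2 - mu ^+ 2.
  have -> : \sum_s (Num.sqrt (w s t) * (b s - mu)) ^+ 2 =
     \sum_s (w s t * b s ^+ 2 - (2 * mu) * (w s t * b s) + mu ^+ 2 * w s t).
    by apply: eq_bigr => s _; rewrite exprMn sqr_sqrtr ?w_ge0 //; ring.
  rewrite big_split sumrB /= -!mulr_sumr sum_w // -(Ew_w b) -/mu; ring.
rewrite lerBlDr; apply: le_trans (ler_norm _) _.
apply: le_trans (@wsum_bound (fun s => b s ^+ 2) (M ^+ 2) t (sqr_ge0 _) _) _.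
  move=> s /=; rewrite normrX !expr2.
  by apply: ler_pM; rewrite ?normr_ge0.
by rewrite lerDl sqr_ge0.
Qed.

Definition dd f t := dE (fun s => f s * b s) t - (dE f t * Ew b t + Ew f t * dE b t).

Lemma dE_derive f t : is_derive t (1:R) (dE f) (dd f t).
Proof.
have -> : dE f = Ew (fun s => f s * b s) - Ew f * Ew b by apply/funext.
have h1 := Ew_derive (fun s => f s * b s) t.
have h2 := Ew_derive f t.
have h3 := Ew_derive b t.
apply: is_derive_eq.
rewrite /dd /dE !scR; ring.
Qed.

Variables (al be : 'I_T -> R).
Definition P t := Ew al t + t * Ew be t.
Definition P1 t := Ew be t + dE al t + t * dE be t.
Definition P2 t := 2 * dE be t + dd al t + t * dd be t.

Lemma P_derive t : is_derive t (1:R) P (P1 t).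
Proof.
have -> : P = Ew al + id * Ew be by apply/funext.
have h1 := Ew_derive al t.
have h2 := Ew_derive be t.
apply: is_derive_eq.
rewrite /P1 /dE !scR; ring.
Qed.

Lemma P1_derive t : is_derive t (1:R) P1 (P2 t).
Proof.
have -> : P1 = Ew be + dE al + id * dE be by apply/funext.
have h1 := dE_derive al t.
have h2 := dE_derive be t.
have h3 := Ew_derive be t.
apply: is_derive_eq.
rewrite /P2 /dE !scR; ring.
Qed.

Lemma dE_lin f g (k : R) t : dE (fun s => f s + k * g s) t = dE f t + k * dE g t.
Proof.
rewrite /dE (@Ew_ext (fun s => (f s + k * g s) * b s) (fun s => f s * b s + k * (g s * b s))).
  by rewrite !Ew_lin; ring.
by move=> s; ring.
Qed.

Lemma dE_ext f g t : f =1 g -> dE f t = dE g t.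
Proof. by move=> fg; rewrite /dE (Ew_ext _ _ _ fg) (@Ew_ext (fun s => f s * b s) (fun s => g s * b s)) // => s; rewrite fg. Qed.

Lemma dd_lin f g (k : R) t : dd (fun s => f s + k * g s) t = dd f t + k * dd g t.
Proof.
rewrite /dd (@dE_ext (fun s => (f s + k * g s) * b s) (fun s => f s * b s + k * (g s * b s))).
  by rewrite !dE_lin !Ew_lin; ring.
by move=> s; ring.
Qed.

Section Bounds.
Variables (u M B t : R).
Hypotheses (u0 : 0 <= u) (M0 : 0 <= M) (B0 : 0 <= B).
Hypothesis Hbe : forall s, `|be s| <= u.
Hypothesis Hb : forall s, `|b s| <= M.
Hypothesis Hg : forall s, `|al s + t * be s| <= B.

Lemma P1_bound : `|P1 t| <= u + B * M.
Proof.
have -> : P1 t = Ew be t + dE (fun s => al s + t * be s) t by rewrite dE_lin /P1; ring.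
apply: le_trans (ler_normD _ _) _.
apply: lerD; first exact: Ew_bound.
exact: cov_bound.
Qed.

Lemma P2_bound : `|P2 t| <= 2 * u * M + 3 * B * M ^+ 2.
Proof.
have -> : P2 t = 2 * dE be t + dd (fun s => al s + t * be s) t by rewrite dd_lin /P2; ring.
apply: le_trans (ler_normD _ _) _.
have -> : 3 * B * M ^+ 2 = (B * M) * M + ((B * M) * M + B * (M * M)) by ring.
apply: lerD.
  rewrite normrM ger0_norm // -mulrA ler_pM2l //; exact: cov_bound.
rewrite /dd; apply: le_trans (ler_normB _ _) _.
apply: lerD.
  apply: cov_bound => //; first exact: mulr_ge0.
  by move=> s; rewrite normrM; apply: ler_pM.
apply: le_trans (ler_normD _ _) _.
apply: lerD; rewrite normrM; apply: ler_pM => //.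
- exact: cov_bound.
- exact: Ew_bound.
- exact: Ew_bound.
- exact: cov_bound.
Qed.

End Bounds.

End S.

Section Neuron.
Variable R : realType.
Variables (sigma : R -> R) (s1 s2 : R).
Hypothesis Hd1 : forall x : R, derivable sigma x 1.
Hypothesis Hd2 : forall x : R, derivable (derive1 sigma) x 1.
Hypothesis Hs1 : forall x : R, `|derive1 sigma x| <= s1.
Hypothesis Hs2 : forall x : R, `|derive1 (derive1 sigma) x| <= s2.

Lemma sig_der x : is_derive x (1:R) sigma (derive1 sigma x).
Proof. rewrite derive1E; exact: derivableP. Qed.

Lemma sig_der2 x : is_derive x (1:R) (derive1 sigma) (derive1 (derive1 sigma) x).
Proof. rewrite [X in is_derive _ _ _ X]derive1E; exact: derivableP. Qed.

Variables (T : nat) (a b al be : 'I_T -> R).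
Notation PP := (P _ _ a b al be).
Notation PP1 := (P1 _ _ a b al be).
Notation PP2 := (P2 _ _ a b al be).

Lemma h_derive t : is_derive t (1:R) (fun t => sigma (PP t)) (derive1 sigma (PP t) * PP1 t).
Proof. exact: (is_derive1_comp (sig_der (PP t)) (P_derive _ _ a b al be t)). Qed.

Lemma h1_derive t : is_derive t (1:R) (fun t => derive1 sigma (PP t) * PP1 t)
  (derive1 (derive1 sigma) (PP t) * PP1 t * PP1 t + derive1 sigma (PP t) * PP2 t).
Proof.
have h1 := is_derive1_comp (sig_der2 (PP t)) (P_derive _ _ a b al be t).
have h2 := P1_derive _ _ a b al be t.
have := is_deriveM h1 h2.
move=> H; apply: is_derive_eq H _.
rewrite !scR /=; ring.
Qed.

Variables (u M B : R).
Hypotheses (u0 : 0 <= u) (M0 : 0 <= M) (B0 : 0 <= B).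
Hypothesis Hbe : forall s, `|be s| <= u.
Hypothesis Hb : forall s, `|b s| <= M.
Hypothesis Hg : forall t, 0 <= t <= 1 -> forall s, `|al s + t * be s| <= B.

Lemma neuron1 : `|sigma (PP 1) - sigma (PP 0)| <= s1 * (u + B * M).
Proof.
have := @mvt_bound R _ _ 0 1 (s1 * (u + B * M)) ler01 h_derive.
rewrite subr0 mulr1; apply => x Hx.
rewrite normrM; apply: ler_pM => //.
- have H := (P1_bound _ _ a b al be u M B x u0 M0 B0 Hbe Hb (Hg x Hx)). exact: H.
Qed.

Lemma neuron2 : `|sigma (PP 1) - sigma (PP 0) - derive1 sigma (PP 0) * PP1 0|
  <= s2 * (u + B * M) ^+ 2 + s1 * (2 * u * M + 3 * B * M ^+ 2).
Proof.
apply: (@taylor2_bound R _ _ _ _ h_derive h1_derive) => x Hx.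
apply: le_trans (ler_normD _ _) _.
have s10 : 0 <= s1 by apply: le_trans (Hs1 0).
have s20 : 0 <= s2 by apply: le_trans (Hs2 0).
have HP1 := (P1_bound _ _ a b al be u M B x u0 M0 B0 Hbe Hb (Hg x Hx)).
have X0 : 0 <= u + B * M by apply: addr_ge0 => //; exact: mulr_ge0.
rewrite expr2 mulrA.
apply: lerD; rewrite normrM; apply: ler_pM => //.
- rewrite normrM; apply: ler_pM => //; exact: Hs2.
- exact: (P2_bound _ _ a b al be u M B x u0 M0 B0 Hbe Hb (Hg x Hx)).
Qed.

End Neuron.

Section Matrix.
Variable R : realType.
Variables (sigma : R -> R) (d T : nat) (X : 'M[R]_(d, T)) (q : 'cV[R]_d).
Variables (U0 dU : 'cV[R]_d) (W0 dW : 'M[R]_d).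

Definition alv (s : 'I_T) := (U0^T *m X) 0 s.
Definition bev (s : 'I_T) := (dU^T *m X) 0 s.
Definition av (s : 'I_T) := (X^T *m W0 *m q) s 0.
Definition bv (s : 'I_T) := (X^T *m dW *m q) s 0.

Lemma hneur_P t : hneur sigma X q (U0 + t *: dU) (W0 + t *: dW) = sigma (P _ _ av bv alv bev t).
Proof.
rewrite /hneur /attn; congr (sigma _).
have EU : (U0 + t *: dU)^T *m X = U0^T *m X + t *: (dU^T *m X).
  by rewrite linearD /= linearZ /= mulmxDl -scalemxAl.
have EZ : X^T *m (W0 + t *: dW) *m q = X^T *m W0 *m q + t *: (X^T *m dW *m q).
  by rewrite mulmxDr mulmxDl -scalemxAr -scalemxAl.
rewrite mulmxA EU /softmax EZ.
rewrite /P -Ew_lin Ew_w /alv /bev /av /bv /w /ex /Nf.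
set A := U0^T *m X. set B := dU^T *m X. set Z := X^T *m W0 *m q. set Z' := X^T *m dW *m q.
rewrite mxE; apply: eq_bigr => s _.
rewrite !mxE.
under [X in _ = _ / X * _]eq_bigr do rewrite mul1r.
rewrite mulrC; congr (_ * _); congr (_ / _); apply: eq_bigr => r _; rewrite /ex !mxE. by [].
Qed.
End Matrix.

Section VBounds.
Variable R : realType.

Lemma vnorm_ge0 d (v : 'cV[R]_d) : 0 <= vnorm v.
Proof. exact: sqrtr_ge0. Qed.

Lemma fnorm_ge0 p r (A : 'M[R]_(p, r)) : 0 <= fnorm A.
Proof. exact: sqrtr_ge0. Qed.

Lemma entry_bound d T (V : 'cV[R]_d) (X : 'M[R]_(d, T)) s :
  inX X -> `|(V^T *m X) 0 s| <= vnorm V.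
Proof.
move=> HX; rewrite mxE.
have -> : \sum_j V^T 0 j * X j s = \sum_j V j 0 * (col s X) j 0.
  by apply: eq_bigr => j _; rewrite !mxE.
apply: le_trans (cs _ _ _ _) _.
rewrite -/(vnorm V) -/(vnorm (col s X)).
rewrite -[leRHS]mulr1; apply: ler_wpM2l; [exact: vnorm_ge0 | exact: HX].
Qed.

Lemma bv_bound d T (X : 'M[R]_(d, T)) (q : 'cV[R]_d) (A : 'M[R]_d) s :
  inX X -> vnorm q <= 1 -> `|(X^T *m A *m q) s 0| <= fnorm A.
Proof.
move=> HX Hq.
have -> : (X^T *m A *m q) s 0 = \sum_k \sum_l A k l * (X k s * q l 0).
  rewrite mxE; under eq_bigr => l _ do rewrite mxE big_distrl /=.
  rewrite exchange_big; apply: eq_bigr => k _; apply: eq_bigr => l _.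
  rewrite mxE; ring.
rewrite pair_bigA /=.
apply: le_trans (cs _ _ _ _) _.
have EA : fnorm A = Num.sqrt (\sum_(p : 'I_d * 'I_d) A p.1 p.2 ^+ 2) by rewrite /fnorm pair_bigA.
rewrite EA -[leRHS]mulr1; apply: ler_wpM2l; first exact: sqrtr_ge0.
have -> : \sum_(p : 'I_d * 'I_d) (X p.1 s * q p.2 0) ^+ 2 =
    (\sum_k (col s X) k 0 ^+ 2) * (\sum_l q l 0 ^+ 2).
  rewrite -(pair_bigA _ (fun k l => (X k s * q l 0) ^+ 2)) /= big_distrl /=; apply: eq_bigr => k _.
  rewrite big_distrr /=; apply: eq_bigr => l _; rewrite !mxE; ring.
rewrite sqrtrM; last by apply: sumr_ge0 => i _; exact: sqr_ge0.
rewrite -[1]mulr1; apply: ler_pM; try exact: sqrtr_ge0.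
  exact: HX.
exact: Hq.
Qed.

End VBounds.

Lemma alg1 (R : realType) (s1 s2 B u M c' r1 r2 : R) :
  0 <= s1 -> 0 <= s2 -> 0 <= B -> 0 <= u -> 0 <= M -> 0 <= c' -> c' <= r1 ->
  Num.sqrt (u ^+ 2 + M ^+ 2) <= r2 ->
  c' * (s1 * (u + B * M)) + (s2 * (u + B * M) ^+ 2 + s1 * (2 * u * M + 3 * B * M ^+ 2))
  <= s1 * Num.sqrt (1 + B ^+ 2) * r1 * r2
     + (s2 * (1 + B ^+ 2) + 8 * s1 * Num.sqrt (1 + B ^+ 2)) * r2 ^+ 2.
Proof.
move=> s10 s20 B0 u0 M0 c0 cr Nr.
set N := Num.sqrt (u ^+ 2 + M ^+ 2).
set S := Num.sqrt (1 + B ^+ 2).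
have N0 : 0 <= N by exact: sqrtr_ge0.
have S0 : 0 <= S by exact: sqrtr_ge0.
have hN2 : N ^+ 2 = u ^+ 2 + M ^+ 2 by rewrite sqr_sqrtr // addr_ge0 ?sqr_ge0.
have hS2 : S ^+ 2 = 1 + B ^+ 2 by rewrite sqr_sqrtr // addr_ge0 ?sqr_ge0.
have hS1 : 1 <= S by rewrite -sqrtr1 ler_sqrt ?addr_ge0 ?sqr_ge0 // lerDl sqr_ge0.
have hBS : B <= S by rewrite -(ger0_norm B0) -sqrtr_sqr ler_sqrt ?addr_ge0 ?sqr_ge0 // lerDr.
have X0 : 0 <= u + B * M by apply: addr_ge0 => //; exact: mulr_ge0.
have h1 : u + B * M <= S * N.
  rewrite -(ger0_norm X0) -sqrtr_sqr /S /N -sqrtrM ?addr_ge0 ?sqr_ge0 //.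
  rewrite ler_sqrt; last by apply: mulr_ge0; apply: addr_ge0; rewrite ?sqr_ge0.
  have := sqr_ge0 (u * B - M); nra.
have r20 : 0 <= r2 by exact: le_trans Nr.
have h1' : (u + B * M) ^+ 2 <= (S * r2) ^+ 2.
  rewrite !expr2; apply: ler_pM => //; apply: le_trans h1 _; exact: ler_wpM2l.
have h2 : 2 * u * M + 3 * B * M ^+ 2 <= 8 * S * r2 ^+ 2.
  have a1 : 2 * u * M <= N ^+ 2 by rewrite hN2; have := sqr_ge0 (u - M); nra.
  have a2 : B * M ^+ 2 <= S * M ^+ 2 by apply: ler_wpM2r; rewrite ?sqr_ge0.
  have a3 : M ^+ 2 <= N ^+ 2 by rewrite hN2 lerDr sqr_ge0.
  have a4 : N ^+ 2 <= r2 ^+ 2 by rewrite !expr2; apply: ler_pM.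
  have a5 : 0 <= S * r2 ^+ 2 by rewrite mulr_ge0 ?sqr_ge0.
  have a6 : S * M ^+ 2 <= S * r2 ^+ 2 by apply: ler_wpM2l => //; apply: le_trans a3 a4.
  have a7 : r2 ^+ 2 <= S * r2 ^+ 2 by rewrite -[X in X <= _]mul1r; apply: ler_wpM2r; rewrite ?sqr_ge0.
  lra.
have h3 : c' * (s1 * (u + B * M)) <= s1 * S * r1 * r2.
  have -> : s1 * S * r1 * r2 = s1 * (r1 * (S * r2)) by ring.
  rewrite mulrCA; apply: ler_wpM2l => //.
  apply: ler_pM => //.
  apply: le_trans h1 _; exact: ler_wpM2l.
have h4 : s2 * (u + B * M) ^+ 2 <= s2 * (1 + B ^+ 2) * r2 ^+ 2.
  rewrite -hS2 -mulrA -exprMn; exact: (ler_wpM2l s20 h1').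
have h5 : s1 * (2 * u * M + 3 * B * M ^+ 2) <= 8 * s1 * S * r2 ^+ 2.
  have -> : 8 * s1 * S * r2 ^+ 2 = s1 * (8 * S * r2 ^+ 2) by ring.
  exact: (ler_wpM2l s10 h2).
lra.
Qed.


Lemma aux_N (R : realType) (u M ru rw sm : R) : 0 < sm -> 0 <= u -> 0 <= M ->
  u <= ru / sm -> M <= rw / sm ->
  Num.sqrt (u ^+ 2 + M ^+ 2) <= Num.sqrt (rw ^+ 2 + ru ^+ 2) / sm.
Proof.
move=> sm0 u0 M0 hu hM.
rewrite ler_pdivlMr // -[sm in leLHS](@ger0_norm _ sm (ltW sm0)) -sqrtr_sqr -sqrtrM ?addr_ge0 ?sqr_ge0 //.
rewrite ler_sqrt ?addr_ge0 ?sqr_ge0 //.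
rewrite ler_pdivlMr // in hu; rewrite ler_pdivlMr // in hM.
have a1 : 0 <= u * sm by rewrite mulr_ge0 // ltW.
have a2 : 0 <= M * sm by rewrite mulr_ge0 // ltW.
nra.
Qed.

Local Close Scope classical_set_scope.

Theorem lemma3 (R : realType) (sigma : R -> R) (s0 s1 s2 : R)
  (Hd1 : forall x : R, derivable sigma x 1)
  (Hd2 : forall x : R, derivable (derive1 sigma) x 1)
  (Hs0 : forall x : R, `|sigma x| <= s0)
  (Hs1 : forall x : R, `|derive1 sigma x| <= s1)
  (Hs2 : forall x : R, `|derive1 (derive1 sigma) x| <= s2)
  (d T m n : nat) (Hm : ~~ odd m)
  (delta rc ru rw : R)
  (Hdelta : 0 < delta < 1) (Hrc : 0 < rc) (Hru : 0 < ru) (Hrw : 0 < rw)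
  (X : 'I_n -> 'M[R]_(d, T)) (q : 'I_n -> 'cV[R]_d)
  (HX : forall j, inX (X j)) (Hq : forall j, vnorm (q j) <= 1)
  (c0 : 'I_m -> R) (U0 : 'I_m -> 'cV[R]_d) (W0 : 'I_m -> 'M[R]_d)
  (Hinit : sym_init c0 U0 W0)
  (HE : eventU delta U0) :
  forall (c : 'I_m -> R) (U : 'I_m -> 'cV[R]_d) (W : 'I_m -> 'M[R]_d),
    inOmega rc ru rw c0 U0 W0 c U W ->
    forall j : 'I_n,
      `|fnet sigma (X j) (q j) c U W - flin sigma (X j) (q j) c0 U0 W0 c U W|
      <= (Num.sqrt m%:R)^-1 *
         (L1m s1 d m delta ru * rc * Num.sqrt (rw ^+ 2 + ru ^+ 2)
          + L2m s1 s2 d m delta ru * (rw ^+ 2 + ru ^+ 2)).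
Proof.
move=> c U W HO j.
have s10 : 0 <= s1 by apply: le_trans (Hs1 0).
have s20 : 0 <= s2 by apply: le_trans (Hs2 0).
pose Pi i := P R T (av R d T (X j) (q j) (W0 i)) (bv R d T (X j) (q j) (W i - W0 i))
   (alv R d T (X j) (U0 i)) (bev R d T (X j) (U i - U0 i)).
pose Pi1 i := P1 R T (av R d T (X j) (q j) (W0 i)) (bv R d T (X j) (q j) (W i - W0 i))
   (alv R d T (X j) (U0 i)) (bev R d T (X j) (U i - U0 i)).
have EF : (fun t : R => fnet sigma (X j) (q j)
             (fun i => c0 i + t * (c i - c0 i))
             (fun i => U0 i + t *: (U i - U0 i))
             (fun i => W0 i + t *: (W i - W0 i))) =
    fun t => (Num.sqrt m%:R)^-1 * \sum_i (c0 i + t * (c i - c0 i)) * sigma (Pi i t).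
  apply/funext => t; rewrite /fnet; congr (_ * _); apply: eq_bigr => i _.
  by rewrite hneur_P.
have E1 : fnet sigma (X j) (q j) c U W =
    (Num.sqrt m%:R)^-1 * \sum_i (c0 i + 1 * (c i - c0 i)) * sigma (Pi i 1).
  have := congr1 (fun F => F 1) EF => /= <-.
  have HC : (fun i => c0 i + 1 * (c i - c0 i)) = c by apply/funext => i; rewrite mul1r addrC subrK.
  have HU : (fun i => U0 i + 1 *: (U i - U0 i)) = U by apply/funext => i; rewrite scale1r addrC subrK.
  have HW : (fun i => W0 i + 1 *: (W i - W0 i)) = W by apply/funext => i; rewrite scale1r addrC subrK.
  by rewrite HC HU HW.
have E0 : fnet sigma (X j) (q j) c0 U0 W0 =
    (Num.sqrt m%:R)^-1 * \sum_i (c0 i + 0 * (c i - c0 i)) * sigma (Pi i 0).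
  have := congr1 (fun F => F 0) EF => /= <-.
  have HC : (fun i => c0 i + 0 * (c i - c0 i)) = c0 by apply/funext => i; rewrite mul0r addr0.
  have HU : (fun i => U0 i + 0 *: (U i - U0 i)) = U0 by apply/funext => i; rewrite scale0r addr0.
  have HW : (fun i => W0 i + 0 *: (W i - W0 i)) = W0 by apply/funext => i; rewrite scale0r addr0.
  by rewrite HC HU HW.
have Hg i : is_derive (0:R) (1:R) (fun t => (c0 i + t * (c i - c0 i)) * sigma (Pi i t))
    ((c i - c0 i) * sigma (Pi i 0) + c0 i * (derive1 sigma (Pi i 0) * Pi1 i 0)).
  have hl : is_derive (0:R) (1:R) (fun t : R => c0 i + t * (c i - c0 i)) (c i - c0 i).
    have := is_deriveD (is_derive_cst (c0 i) (0:R) (1:R))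
      (is_deriveM (is_derive_id (0:R) (1:R)) (is_derive_cst (c i - c0 i) (0:R) (1:R))).
    by rewrite scaler0 add0r [_%:A]mulr1 add0r.
  have hh := h_derive R sigma Hd1 T (av R d T (X j) (q j) (W0 i)) (bv R d T (X j) (q j) (W i - W0 i))
   (alv R d T (X j) (U0 i)) (bev R d T (X j) (U i - U0 i)) 0.
  have := is_deriveM hl hh.
  move=> H; apply: is_derive_eq H _.
  rewrite !scR mul0r addr0 /Pi /Pi1; ring.
have Hder : derive1 (fun t : R => fnet sigma (X j) (q j)
             (fun i => c0 i + t * (c i - c0 i))
             (fun i => U0 i + t *: (U i - U0 i))
             (fun i => W0 i + t *: (W i - W0 i))) 0 =
    (Num.sqrt m%:R)^-1 * \sum_i ((c i - c0 i) * sigma (Pi i 0) + c0 i * (derive1 sigma (Pi i 0) * Pi1 i 0)).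
  rewrite EF derive1E.
  have -> : (fun t => (Num.sqrt m%:R)^-1 * \sum_i (c0 i + t * (c i - c0 i)) * sigma (Pi i t)) =
     cst ((Num.sqrt m%:R)^-1) * \sum_i (fun t => (c0 i + t * (c i - c0 i)) * sigma (Pi i t)).
    by apply/funext => t; rewrite fct_sumE.
  have hs := is_derive_sum Hg.
  have := is_deriveM (is_derive_cst ((Num.sqrt m%:R)^-1) (0:R) 1) hs.
  case=> _ ->. by rewrite !scR mulr0 addr0.
rewrite /flin Hder E1 E0.
set k := (Num.sqrt m%:R)^-1.
have -> : k * (\sum_i (c0 i + 1 * (c i - c0 i)) * sigma (Pi i 1)) -
   (k * (\sum_i (c0 i + 0 * (c i - c0 i)) * sigma (Pi i 0)) +
    k * (\sum_i ((c i - c0 i) * sigma (Pi i 0) + c0 i * (derive1 sigma (Pi i 0) * Pi1 i 0)))) =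
   k * \sum_i ((c i - c0 i) * (sigma (Pi i 1) - sigma (Pi i 0)) +
      c0 i * (sigma (Pi i 1) - sigma (Pi i 0) - derive1 sigma (Pi i 0) * Pi1 i 0)).
  rewrite -mulrDr -mulrBr; congr (_ * _); rewrite -big_split -sumrB; apply: eq_bigr => i _ /=; ring.
case: (posnP m) => [m0|mpos].
  have -> : k = 0 by rewrite /k m0 sqrtr0 invr0.
  by rewrite !mul0r normr0.
pose sm := Num.sqrt (m%:R : R).
have sm0 : 0 < sm by rewrite sqrtr_gt0 ltr0n.
have smm : sm ^+ 2 = m%:R by rewrite sqr_sqrtr ?ler0n.
set B := BUm d m delta ru.
set Z := (L1m s1 d m delta ru * rc * Num.sqrt (rw ^+ 2 + ru ^+ 2) + L2m s1 s2 d m delta ru * (rw ^+ 2 + ru ^+ 2)).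
have k0 : 0 <= k by rewrite invr_ge0 sqrtr_ge0.
rewrite normrM ger0_norm //; apply: ler_wpM2l => //.
apply: le_trans (ler_norm_sum _ _ _) _.
apply: (@le_trans _ _ (\sum_(i < m) Z / sm ^+ 2)); last first.
  rewrite sumr_const card_ord -mulr_natr -smm divfK //.
  by rewrite expf_neq0 // lt0r_neq0.
apply: ler_sum => i _.
have [hc hu hw] := HO i.
have B0 : 0 <= B.
  rewrite /B /BUm; apply: addr_ge0; first by apply: addr_ge0; exact: sqrtr_ge0.
  by apply: divr_ge0; [exact: ltW | exact: sqrtr_ge0].
have Hbe s := entry_bound R d T (U i - U0 i) (X j) s (HX j).
have Hb s := bv_bound R d T (X j) (q j) (W i - W0 i) s (HX j) (Hq j).
have Hgg (t : R) (Ht : 0 <= t <= 1) s :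
    `|alv R d T (X j) (U0 i) s + t * bev R d T (X j) (U i - U0 i) s| <= B.
  case/andP: Ht => t0 t1.
  apply: le_trans (ler_normD _ _) _; rewrite /B /BUm; apply: lerD.
    apply: le_trans (HE i); exact: entry_bound.
  rewrite normrM (ger0_norm t0); apply: le_trans hu.
  rewrite -[leRHS]mul1r; apply: ler_pM => //; exact: Hbe.
have N1 := neuron1 R sigma s1 Hd1 Hs1 T (av R d T (X j) (q j) (W0 i)) (bv R d T (X j) (q j) (W i - W0 i)) (alv R d T (X j) (U0 i)) (bev R d T (X j) (U i - U0 i)) _ _ B (vnorm_ge0 _ _ _) (fnorm_ge0 _ _ _ _) B0 Hbe Hb Hgg.
have N2 := neuron2 R sigma s1 s2 Hd1 Hd2 Hs1 Hs2 T (av R d T (X j) (q j) (W0 i)) (bv R d T (X j) (q j) (W i - W0 i)) (alv R d T (X j) (U0 i)) (bev R d T (X j) (U i - U0 i)) _ _ B (vnorm_ge0 _ _ _) (fnorm_ge0 _ _ _ _) B0 Hbe Hb Hgg.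
have hc0 : `|c0 i| = 1 by case: Hinit => Hc _; case: (Hc i) => ->; rewrite ?normrN normr1.
apply: le_trans (ler_normD _ _) _; rewrite !normrM hc0 mul1r.
apply: le_trans.
  apply: lerD; first exact: (ler_wpM2l (normr_ge0 _) N1).
  exact: N2.
apply: le_trans.
  apply: (@alg1 R s1 s2 B _ _ _ _ _ s10 s20 B0 (vnorm_ge0 _ _ _) (fnorm_ge0 _ _ _ _) (normr_ge0 _) hc).
  exact: (@aux_N R _ _ ru rw _ sm0 (vnorm_ge0 _ _ _) (fnorm_ge0 _ _ _ _) hu hw).
rewrite le_eqVlt; apply/orP; left; apply/eqP.
rewrite /Z /L1m /L2m -/B expr_div_n sqr_sqrtr ?addr_ge0 ?sqr_ge0 //.
rewrite -/sm; field; exact: lt0r_neq0.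
Qed.
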